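(* Let $\mathbf{k}$ be a field, $p\ge3$, $S=\mathbf{k}[e_1,\dots,e_{2p}]$, and let $\mathcal{F}$, $\mathcal{G}$ and $\varphi=(\varphi_i)_{i\ge0}:\mathcal{F}\to\mathcal{G}$ be as defined below. Then $\varphi$ is a map of chain complexes.
   Context: Let $V=\operatorname{span}_{\mathbf{k}}(e_1,\dots,e_{p-1})$, $W=\operatorname{span}_{\mathbf{k}}(e_{p+1},\dots,e_{2p-1})$; for $v\in V$ let $v'\in W$ be its image under $e_i\mapsto e_{p+i}$. For $U\in\{V,W\}$, $\partial^U:S\otimes\bigwedge^kU\to S\otimes\bigwedge^{k-1}U$ is $s\otimes u_1\wedge\cdots\wedge u_k\mapsto\sum_l(-1)^lsu_l\otimes u_1\wedge\cdots\widehat{u_l}\cdots\wedge u_k$. $\mathcal{F}$: $C_{a,b}=S\otimes\bigwedge^{a+2}V\otimes\bigwedge^bW$ ($a,b\ge0$), $\partial^h=\partial^V\otimes1:C_{a,b}\to C_{a-1,b}$ (zero if $a=0$), $\partial^v(s\otimes\omega\otimes w_1\wedge\cdots\wedge w_b)=(-1)^a\sum_l(-1)^lsw_l\otimes\omega\otimes w_1\wedge\cdots\widehat{w_l}\cdots\wedge w_b$; $\mathcal{F}_n=\bigoplus_{a+b=n}C_{a,b}$ with differential $\partial^h+\partial^v$. $\mathcal{G}$: for $i\ge1$, $M_i=(\bigwedge^iW\otimes W)/D_i$ where $D_i$ is spanned by $\sum_{l=1}^{i+1}(-1)^l(w_1\wedge\cdots\widehat{w_l}\cdots\wedge w_{i+1})\otimes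 w_l$; classes written $[\eta\otimes w]$. $\mathcal{G}_0=S$, $\mathcal{G}_i=S\otimes M_i$, differential $s\otimes[(w_1\wedge\cdots\wedge w_i)\otimes w]\mapsto\sum_l(-1)^lsw_l\otimes[(w_1\wedge\cdots\widehat{w_l}\cdots\wedge w_i)\otimes w]$ for $i\ge2$ and $s\otimes[w_1\otimes w]\mapsto-sw_1w$ for $i=1$ ($M_i\cong\mathbb{S}^{(2,1^{i-1})}W$; $\mathcal{G}$ resolves $S/\langle e_{p+1},\dots,e_{2p-1}\rangle^2$). $\varphi$: zero on $C_{a,b}$ for $a\ge1$; $\varphi_0(s\otimes v_1\wedge v_2)=s(v_1v_2'-v_2v_1')$ on $C_{0,0}$; $\varphi_i(s\otimes v_1\wedge v_2\otimes\eta)=sv_1\otimes[\eta\otimes v_2']-sv_2\otimes[\eta\otimes v_1']$ on $C_{0,i}$, $i\ge1$. *)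

(* Defs.v *)
From HB Require Import structures.
From mathcomp Require Import all_boot all_order all_algebra.
From mathcomp Require Import mpoly.
Set Implicit Arguments. Unset Strict Implicit. Unset Printing Implicit Defensive.
Import GRing.Theory.
Local Open Scope ring_scope.

(* Concrete encoding (all free modules are written in the standard bases):
   - S = k[e_1,...,e_{2p}] = {mpoly k[2*p]}, e_{j+1} = 'X_j.
   - V has basis e_1..e_{p-1}, indexed by i : 'I_(p-1) (i <-> e_{i+1});
     W has basis e_{p+1}..e_{2p-1}, indexed by i : 'I_(p-1) (i <-> e_{p+i+1}),
     so that v' (image of e_{i+1} under e_i |-> e_{p+i}) has the same index i.
   - A basis element of /\^k U is u_{j1} /\ ... /\ u_{jk} with j1 < ... < jk,
     encoded by the set {j1,...,jk}; the position of j in A is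
     #|[set x in A | (val x <= val j)%N]| (1-based). *)

Section Complexes.
Variables (k : fieldType) (p : nat).

Definition S := {mpoly k[2 * p]}.
Definition idx := 'I_(p - 1).

(* the variable e_{j+1} of S (0 if out of range, which never happens below) *)
Definition evar (j : nat) : S :=
  match @insub nat (fun m => m < 2 * p)%N _ j with
  | Some i => 'X_i
  | None => 0
  end.

Definition ev (i : idx) : S := evar i.
Definition ew (i : idx) : S := evar (p + i).

Definition pos (A : {set idx}) (j : idx) : nat := #|[set x in A | (val x <= val j)%N]|.
Definition sgn (l : nat) : S := (-1) ^+ l.

(* basis element (A,B) <-> 1 (x) /\_{A} V (x) /\_{B} W, lying in C_{a,b} with
   a = #|A| - 2, b = #|B| (only #|A| >= 2 is relevant) *)
Definition FB := ({set idx} * {set idx})%type.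
Definition Fel := {ffun FB -> S}.

Definition inF (n : nat) (x : Fel) : Prop :=
  forall A B, x (A, B) != 0 -> (2 <= #|A|)%N /\ (#|A| + #|B| = n + 2)%N.

(* (partial^h + partial^v) applied to the basis element (A,B) *)
Definition dF_basis (u : FB) : Fel :=
  let: (A, B) := u in
  [ffun v : FB =>
     (if (2 < #|A|)%N then
        \sum_(j in A) (if v == (A :\ j, B) then sgn (pos A j) * ev j else 0)
      else 0)
   + sgn (#|A| - 2) *
       \sum_(j in B) (if v == (A, B :\ j) then sgn (pos B j) * ew j else 0)].

Definition dF (x : Fel) : Fel :=
  [ffun v => \sum_(u : FB) x u * dF_basis u v].

(* G_0 = S.  For i >= 1, G_i = S (x) M_i with M_i = (/\^i W (x) W) / D_i;
   we work with representatives in S (x) /\^i W (x) W, whose basis element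
   (B, w) <-> 1 (x) (/\_{B} W (x) w_w), #|B| = i. *)
Definition GB := ({set idx} * idx)%type.
Definition Gel := {ffun GB -> S}.

(* differential G_i -> G_{i-1} for i >= 2, on representatives *)
Definition dG_basis (g : GB) : Gel :=
  let: (B, w) := g in
  [ffun h : GB =>
     \sum_(j in B) (if h == (B :\ j, w) then sgn (pos B j) * ew j else 0)].

Definition dG (y : Gel) : Gel :=
  [ffun h => \sum_(g : GB) y g * dG_basis g h].

Definition dG1_basis (g : GB) : S :=
  let: (B, w) := g in \sum_(j in B) (- (ew j * ew w)).

Definition dG1 (y : Gel) : S := \sum_(g : GB) y g * dG1_basis g.

(* generator of D_i attached to the basis element /\_{B'} W, #|B'| = i+1 :
   sum_l (-1)^l (w_1 /\ .. ^w_l .. /\ w_{i+1}) (x) w_l *)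
Definition relG (B' : {set idx}) : Gel :=
  [ffun h : GB =>
     \sum_(j in B') (if h == (B' :\ j, j) then sgn (pos B' j) else 0)].

(* phi_0 : C_{0,0} -> S, s (x) v1 /\ v2 |-> s (v1 v2' - v2 v1'), zero elsewhere *)
Definition phi0_basis (u : FB) : S :=
  let: (A, B) := u in
  if (#|A| == 2)%N && (#|B| == 0)%N then
    \sum_(i in A) \sum_(j in A | (val i < val j)%N) (ev i * ew j - ev j * ew i)
  else 0.

Definition phi0 (x : Fel) : S := \sum_(u : FB) x u * phi0_basis u.

(* phi_i (i >= 1) : C_{0,i} -> G_i,
   s (x) v1 /\ v2 (x) eta |-> s v1 (x) [eta (x) v2'] - s v2 (x) [eta (x) v1'],
   zero on C_{a,b} with a >= 1 *)
Definition phiG_basis (u : FB) : Gel :=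
  let: (A, B) := u in
  [ffun h : GB =>
     if (#|A| == 2)%N && (1 <= #|B|)%N then
       \sum_(i in A) \sum_(j in A | (val i < val j)%N)
          ((if h == (B, j) then ev i else 0) - (if h == (B, i) then ev j else 0))
     else 0].

Definition phiG (x : Fel) : Gel :=
  [ffun h => \sum_(u : FB) x u * phiG_basis u h].

End Complexes.

(* Main.v *)
Require Import Defs.
From HB Require Import structures.
From mathcomp Require Import all_boot all_order all_algebra.
From mathcomp Require Import mpoly.
From mathcomp Require Import ring zify.
Set Implicit Arguments. Unset Strict Implicit. Unset Printing Implicit Defensive.
Import GRing.Theory.
Local Open Scope ring_scope.

Section Aux.
Variables (k : fieldType) (p : nat).
Local Notation SS := (S k p).
Local Notation I := (idx p).

Lemma delta_sum (T J : finType) (P : pred J) (f : J -> T) (g : J -> SS) (Phi : T -> SS) :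
  \sum_(v : T) (\sum_(j | P j) (if v == f j then g j else 0)) * Phi v
  = \sum_(j | P j) g j * Phi (f j).
Proof.
under eq_bigr do rewrite mulr_suml.
rewrite exchange_big; apply: eq_bigr => j _.
rewrite (bigD1 (f j)) //= eqxx big1 ?addr0 // => v /negbTE ->; by rewrite mul0r.
Qed.

Lemma swap_sum (T J : finType) (P : pred J) (F : J -> T -> SS) (Phi : T -> SS) :
  \sum_(v : T) (\sum_(j | P j) F j v) * Phi v
  = \sum_(j | P j) \sum_(v : T) F j v * Phi v.
Proof. under eq_bigr do rewrite mulr_suml. by rewrite exchange_big. Qed.

Lemma lin_sum (T J : finType) (x : J -> SS) (F : J -> T -> SS) (Phi : T -> SS) :
  \sum_(v : T) (\sum_(j : J) x j * F j v) * Phi v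
  = \sum_(j : J) x j * \sum_(v : T) F j v * Phi v.
Proof.
rewrite swap_sum; apply: eq_bigr => j _; rewrite mulr_sumr.
by apply: eq_bigr => v _; rewrite mulrA.
Qed.

Lemma phiG_sum A B (Psi : GB p -> SS) :
  \sum_(g : GB p) phiG_basis k (A, B) g * Psi g =
  if (#|A| == 2)%N && (1 <= #|B|)%N then
    \sum_(i in A) \sum_(j in A | (val i < val j)%N) (ev k i * Psi (B, j) - ev k j * Psi (B, i))
  else 0.
Proof.
under eq_bigr do rewrite ffunE.
case: ifP => _; last by rewrite big1 // => g _; rewrite mul0r.
rewrite swap_sum; apply: eq_bigr => i _.
rewrite swap_sum; apply: eq_bigr => j _.
under eq_bigr do rewrite mulrBl.
rewrite sumrB.
congr (_ - _).
  rewrite (bigD1 (B, j)) //= eqxx big1 ?addr0 // => v /negbTE ->; by rewrite mul0r.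
rewrite (bigD1 (B, i)) //= eqxx big1 ?addr0 // => v /negbTE ->; by rewrite mul0r.
Qed.

Lemma pair_sum (x y : I) (G : I -> I -> SS) : (val x < val y)%N ->
  \sum_(i in [set x; y]) \sum_(j in [set x; y] | (val i < val j)%N) G i j = G x y.
Proof.
move=> xy.
have nxy : x \notin [set y].
  by rewrite inE; apply/eqP => exy; move: xy; rewrite exy ltnn.
rewrite big_setU1 //= big_set1 !big_mkcondr /= !big_setU1 //= !big_set1.
by rewrite ltnn xy ltnNge (ltnW xy) ltnn /= !add0r addr0.
Qed.

Lemma triple_sum (a b c : I) (F : I -> SS) : (val a < val b)%N -> (val b < val c)%N ->
  \sum_(m in [set a; b; c]) F m = F a + F b + F c.
Proof.
move=> ab bc.
have nbc : b \notin [set c].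
  by rewrite inE; apply/eqP => e; move: bc; rewrite e ltnn.
have nabc : a \notin [set b; c].
  rewrite !inE; apply/norP; split; apply/eqP => e.
    by move: ab; rewrite e ltnn.
  by move: (ltn_trans ab bc); rewrite e ltnn.
by rewrite -setUA big_setU1 //= big_setU1 //= big_set1 addrA.
Qed.


Lemma card3_sorted (A : {set I}) : #|A| = 3%N ->
  exists a b c : I, [/\ (val a < val b)%N, (val b < val c)%N & A = [set a; b; c]].
Proof.
move=> cA.
have : (2 < #|A|)%N by rewrite cA.
case/card_gt2P => x [y [z [[xA yA zA] [nxy nyz nzx]]]].
have eA : A = [set x; y; z].
  apply/esym/eqP; rewrite eqEcard; apply/andP; split.
    by apply/subsetP => t; rewrite !inE => /orP [/orP [] | ] /eqP ->.
  rewrite cA -setUA cardsU1 cardsU1 cards1 !inE negb_or nxy eq_sym nzx /=.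
  by rewrite nyz.
have neqv : forall u v : I, u != v -> val u != val v.
  by move=> u v; apply: contra => /eqP /val_inj ->.
move: (neqv _ _ nxy) (neqv _ _ nyz) (neqv _ _ nzx) => vxy vyz vzx.
have perm : forall u v w : I, [set x; y; z] = [set u; v; w] -> 
  (val u < val v)%N -> (val v < val w)%N -> 
  exists a b c : I, [/\ (val a < val b)%N, (val b < val c)%N & A = [set a; b; c]].
  by move=> u v w e uv vw; exists u, v, w; rewrite eA e.
case: (ltngtP (val x) (val y)) => hxy; last by move: vxy; rewrite hxy eqxx.
- case: (ltngtP (val y) (val z)) => hyz; last by move: vyz; rewrite hyz eqxx.
  + by apply: (perm x y z).
  + case: (ltngtP (val x) (val z)) => hxz; last by move: vzx; rewrite hxz eqxx.
    * apply: (perm x z y) => //; apply/setP => t; rewrite !inE.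
      by case: (t == x); case: (t == y); case: (t == z).
    * apply: (perm z x y) => //; apply/setP => t; rewrite !inE.
      by case: (t == x); case: (t == y); case: (t == z).
- case: (ltngtP (val y) (val z)) => hyz; last by move: vyz; rewrite hyz eqxx.
  + case: (ltngtP (val x) (val z)) => hxz; last by move: vzx; rewrite hxz eqxx.
    * apply: (perm y x z) => //; apply/setP => t; rewrite !inE.
      by case: (t == x); case: (t == y); case: (t == z).
    * apply: (perm y z x) => //; apply/setP => t; rewrite !inE.
      by case: (t == x); case: (t == y); case: (t == z).
  + apply: (perm z y x) => //; apply/setP => t; rewrite !inE.
    by case: (t == x); case: (t == y); case: (t == z).
Qed.

Section Tri.
Variables (a b c : I).
Hypotheses (ab : (val a < val b)%N) (bc : (val b < val c)%N).
Let ac : (val a < val c)%N := ltn_trans ab bc.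

Let neq (u v : I) : (val u < val v)%N -> (u == v) = false.
Proof. by move=> uv; apply/eqP => e; move: uv; rewrite e ltnn. Qed.
Let neq' (u v : I) : (val u < val v)%N -> (v == u) = false.
Proof. by move=> uv; rewrite eq_sym neq. Qed.

Lemma tri_D1a : [set a; b; c] :\ a = [set b; c].
Proof.
apply/setP => t; rewrite !inE; case: (t =P a) => [->|_] /=; by rewrite ?eqxx ?(neq ab) ?(neq ac) ?orbF.
Qed.
Lemma tri_D1b : [set a; b; c] :\ b = [set a; c].
Proof.
apply/setP => t; rewrite !inE; case: (t =P b) => [->|_] /=; by rewrite ?eqxx ?(neq' ab) ?(neq bc) ?orbF.
Qed.
Lemma tri_D1c : [set a; b; c] :\ c = [set a; b].
Proof.
apply/setP => t; rewrite !inE; case: (t =P c) => [->|_] /=; by rewrite ?eqxx ?(neq' ac) ?(neq' bc) ?orbF.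
Qed.
Lemma tri_pos : [/\ pos [set a; b; c] a = 1%N, pos [set a; b; c] b = 2%N
   & pos [set a; b; c] c = 3%N].
Proof.
rewrite /pos; split.
- have -> : [set x in [set a; b; c] | (val x <= val a)%N] = [set a].
    apply/setP => t; rewrite !inE.
    case: (t =P a) => [e|_]; first by rewrite e /= leqnn.
    case: (t =P b) => [e|_]; first by rewrite e /= leqNgt ab.
    case: (t =P c) => [e|_]; first by rewrite e /= leqNgt ac.
    by [].
  by rewrite cards1.
- have -> : [set x in [set a; b; c] | (val x <= val b)%N] = [set a; b].
    apply/setP => t; rewrite !inE.
    case: (t =P a) => [e|_]; first by rewrite e /= ltnW.
    case: (t =P b) => [e|_]; first by rewrite e /= leqnn.
    case: (t =P c) => [e|_]; first by rewrite e /= leqNgt bc.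
    by [].
  by rewrite cards2 (neq ab).
- have -> : [set x in [set a; b; c] | (val x <= val c)%N] = [set a; b; c].
    apply/setP => t; rewrite !inE.
    case: (t =P a) => [e|_]; first by rewrite e /= ltnW.
    case: (t =P b) => [e|_]; first by rewrite e /= ltnW.
    case: (t =P c) => [e|_]; first by rewrite e /= leqnn.
    by [].
  by rewrite -setUA cardsU1 cards2 !inE (neq ab) (neq ac) (neq bc).
Qed.

Lemma tri_sum (Phi : {set I} -> SS) :
  \sum_(m in [set a; b; c]) sgn k p (pos [set a; b; c] m) * ev k m * Phi ([set a; b; c] :\ m)
  = - (ev k a * Phi [set b; c]) + ev k b * Phi [set a; c] - ev k c * Phi [set a; b].
Proof.
case: tri_pos => pa pb pc.
rewrite triple_sum // pa pb pc tri_D1a tri_D1b tri_D1c /sgn.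
ring.
Qed.

End Tri.


Lemma part2_u (A B : {set I}) (h : GB p) : (2 <= #|A|)%N -> (4 <= #|A| + #|B|)%N ->
  \sum_(g : GB p) phiG_basis k (A, B) g * dG_basis k g h
  = \sum_(v : FB p) dF_basis k (A, B) v * phiG_basis k v h.
Proof.
move=> A2 AB4.
rewrite phiG_sum /dF_basis.
under [RHS]eq_bigr do rewrite ffunE mulrDl.
rewrite big_split /=.
have [e2|[e3|ge4]] : #|A| = 2%N \/ #|A| = 3%N \/ (4 <= #|A|)%N by lia.
- have B1 : (1 <= #|B|)%N by lia.
  rewrite e2 B1 /=.
  rewrite (_ : \sum_(i : FB p) 0 * phiG_basis k i h = 0) ?add0r; last by rewrite big1 // => ? _; rewrite mul0r.
  rewrite subnn /sgn expr0.
  under [RHS]eq_bigr do rewrite mul1r.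
  rewrite delta_sum.
  have Bl : forall l, l \in B -> (0 < #|B :\ l|)%N.
    by move=> l lB; move: AB4; rewrite e2 (cardsD1 l B) lB; lia.
  under [RHS]eq_bigr => l lB do rewrite ffunE e2 /= Bl // mulr_sumr.
  rewrite exchange_big; apply: eq_bigr => i _.
  under [RHS]eq_bigr do rewrite mulr_sumr.
  rewrite exchange_big; apply: eq_bigr => j _.
  rewrite !ffunE !mulr_sumr -sumrB; apply: eq_bigr => l _.
  by case: (h == (B :\ l, j)); case: (h == (B :\ l, i)); rewrite ?mulr0 ?subr0 ?sub0r ?mulrN; ring.
- have B1 : (0 < #|B|)%N by lia.
  rewrite e3 /=.
  under [X in _ = _ + X]eq_bigr do rewrite -mulrA.
  rewrite -mulr_sumr !delta_sum.
  under [X in _ = _ + _ * X]eq_bigr do rewrite ffunE e3 /= mulr0.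
  rewrite big1_eq mulr0 addr0.
  have [a [b [c [ab bc eA]]]] := card3_sorted e3.
  rewrite eA (tri_sum ab bc (fun X => phiG_basis k (X, B) h)) !ffunE !cards2 B1.
  have ac := ltn_trans ab bc.
  have nq : forall u v : I, (val u < val v)%N -> (u != v).
    by move=> u v uv; apply/eqP => e; move: uv; rewrite e ltnn.
  rewrite (nq _ _ ab) (nq _ _ bc) (nq _ _ ac) /= !pair_sum //.
  by case: (h == (B, a)); case: (h == (B, b)); case: (h == (B, c)); ring.
- have A2' : (#|A| == 2%N) = false by apply/negbTE/eqP; lia.
  rewrite A2' /=.
  have -> : (2 < #|A|)%N by lia.
  under [X in _ = _ + X]eq_bigr do rewrite -mulrA.
  rewrite -mulr_sumr !delta_sum.
  under [X in _ = _ + _ * X]eq_bigr do rewrite ffunE A2' /= mulr0.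
  rewrite big1_eq mulr0 addr0 big1 // => j jA.
  rewrite ffunE (_ : #|A :\ j| == 2%N = false) ?mulr0 //.
  move: ge4; rewrite (cardsD1 j A) jA add1n => H; apply/negbTE/eqP => e; by rewrite e in H.
Qed.


Lemma part1_u (A B : {set I}) : (2 <= #|A|)%N -> (#|A| + #|B| = 3)%N ->
  \sum_(g : GB p) phiG_basis k (A, B) g * dG1_basis k g
  = \sum_(v : FB p) dF_basis k (A, B) v * phi0_basis k v.
Proof.
move=> A2 AB3.
rewrite phiG_sum /dF_basis.
under [RHS]eq_bigr do rewrite ffunE mulrDl.
rewrite big_split /=.
under [X in _ = _ + X]eq_bigr do rewrite -mulrA.
rewrite -mulr_sumr.
have [e2|e3] : #|A| = 2%N \/ #|A| = 3%N by lia.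
- have /cards1P [b eB] : #|B| == 1%N by apply/eqP; lia.
  rewrite e2 eB cards1 /=.
  rewrite (_ : \sum_(i : FB p) 0 * phi0_basis k i = 0) ?add0r; last by rewrite big1 // => ? _; rewrite mul0r.
  rewrite delta_sum big_set1 setDv /= e2 cards0 /=.
  have -> : pos [set b] b = 1%N.
    rewrite /pos (_ : [set x in [set b] | (val x <= val b)%N] = [set b]) ?cards1 //.
    by apply/setP => t; rewrite !inE; case: (t =P b) => [e|_]; rewrite ?e ?leqnn.
  rewrite subnn /sgn expr0 expr1 mul1r !mulr_sumr; apply: eq_bigr => i _.
  rewrite !mulr_sumr; apply: eq_bigr => j _.
  rewrite !big_set1; ring.
- have /eqP eB : B == set0 by rewrite -cards_eq0; apply/eqP; lia.
  rewrite e3 eB cards0 /= !delta_sum big_set0 mulr0 addr0.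
  have [a [b [c [ab bc eA]]]] := card3_sorted e3.
  rewrite eA (tri_sum ab bc (fun X => phi0_basis k (X, set0))) /= !cards2 cards0.
  have ac := ltn_trans ab bc.
  have nq : forall u v : I, (val u < val v)%N -> (u != v).
    by move=> u v uv; apply/eqP => e; move: uv; rewrite e ltnn.
  rewrite (nq _ _ ab) (nq _ _ bc) (nq _ _ ac) /= !pair_sum //.
  ring.
Qed.

End Aux.

Theorem proposition7p8 (k : fieldType) (p : nat) :
  (3 <= p)%N ->
  (forall x : Fel k p, inF 1 x -> dG1 (phiG x) = phi0 (dF x)) /\
  (forall (n : nat) (x : Fel k p), (2 <= n)%N -> inF n x ->
     exists c : {ffun {set idx p} -> S k p},
       forall h : GB p,
         dG (phiG x) h - phiG (dF x) h
         = \sum_(B : {set idx p} | #|B| == n) c B * @relG k p B h).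
Proof.
move=> p3; split.
- move=> x xF.
  rewrite /dG1 /phi0.
  under eq_bigr do rewrite ffunE.
  under [RHS]eq_bigr do rewrite ffunE.
  rewrite !lin_sum; apply: eq_bigr => -[A B] _.
  have [->|nz] := eqVneq (x (A, B)) 0; first by rewrite !mul0r.
  case: (xF A B nz) => A2 AB.
  by rewrite part1_u //; lia.
- move=> n x n2 xF; exists [ffun=> 0] => h.
  rewrite big1; last by move=> B _; rewrite ffunE mul0r.
  apply/eqP; rewrite subr_eq0; apply/eqP.
  rewrite /dG /phiG !ffunE.
  under eq_bigr do rewrite ffunE.
  under [RHS]eq_bigr do rewrite ffunE.
  rewrite !lin_sum; apply: eq_bigr => -[A B] _.
  have [->|nz] := eqVneq (x (A, B)) 0; first by rewrite !mul0r.
  case: (xF A B nz) => A2 AB.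
  by rewrite part2_u //; lia.
Qed.
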